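(* Let $F$ be a minimally unsatisfiable clause-set. 1. If $v$ is a singular variable for $F$ which occurs (positively or negatively) in every clause of $F$, then $\{v\}\in F$ or $\{\overline{v}\}\in F$. 2. If $\{x\}\in F$ for some literal $x$, then $v:=\mathrm{var}(x)$ is singular for $F$, with $\mathrm{ldeg}_F(x)=1$. If moreover $F$ is saturated, then $v$ occurs in every clause of $F$.
   Context: Literals are variables $v$ and complements $\overline{v}$; a clause is a finite set of literals with no complementary pair; a clause-set is a finite set of clauses; $\mathrm{var}(F)$ is the set of variables of $F$ and $\mathrm{var}(x)$ the variable underlying literal $x$; $\mathrm{ldeg}_F(x)$ is the number of clauses of $F$ containing literal $x$. A minimally unsatisfiable $F$ is saturated if for every $C \in F$ and every literal $y$ with $\mathrm{var}(y) \in \mathrm{var}(F)\setminus \mathrm{var}(C)$, the clause-set $(F\setminus\{C\})\cup\{C\cup\{y\}\}$ is satisfiable. A variable $v$ is singular for $F$ if $\min(\mathrm{ldeg}_F(v),\mathrm{ldeg}_F(\overline{v}))=1$. *)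

(* Defs.v *)
From mathcomp Require Import all_boot finmap.
Set Implicit Arguments. Unset Strict Implicit. Unset Printing Implicit Defensive.
Local Open Scope fset_scope.

Definition lit := (nat * bool)%type.
Definition pos (v : nat) : lit := (v, true).
Definition neg (v : nat) : lit := (v, false).
Definition lvar (x : lit) : nat := x.1.
Definition compl (x : lit) : lit := (x.1, ~~ x.2).

Definition clause := {fset lit}.
Definition clauseset := {fset clause}.

Definition is_clause (C : clause) : Prop := forall x, x \in C -> compl x \notin C.
Definition is_clauseset (F : clauseset) : Prop := forall C, C \in F -> is_clause C.

Definition varC (C : clause) : {fset nat} := [fset lvar x | x in C].
Definition varF (F : clauseset) : {fset nat} := \bigcup_(C <- F) varC C.

Definition ldeg (F : clauseset) (x : lit) : nat := #|` [fset C in F | x \in C] |.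

Definition sat_lit (f : nat -> bool) (x : lit) : bool := f x.1 == x.2.
Definition sat_clause (f : nat -> bool) (C : clause) : Prop :=
  exists2 x, x \in C & sat_lit f x.
Definition satisfiable (F : clauseset) : Prop :=
  exists f : nat -> bool, forall C, C \in F -> sat_clause f C.

Definition minimally_unsat (F : clauseset) : Prop :=
  ~ satisfiable F /\ forall C, C \in F -> satisfiable (F `\ C).

Definition saturated (F : clauseset) : Prop :=
  minimally_unsat F /\
  forall C y, C \in F -> lvar y \in varF F -> lvar y \notin varC C ->
    satisfiable ((F `\ C) `|` [fset C `|` [fset y]]).

Definition singular (F : clauseset) (v : nat) : Prop :=
  minn (ldeg F (pos v)) (ldeg F (neg v)) = 1.

(* Main.v *)
Require Import Defs.
From mathcomp Require Import all_boot finmap.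
From Stdlib Require Import Classical.
Local Open Scope fset_scope.

Lemma ldeg1P (F : clauseset) x : ldeg F x = 1 ->
  exists C0, [/\ C0 \in F, x \in C0 & forall C, C \in F -> x \in C -> C = C0].
Proof.
rewrite /ldeg => /eqP/cardfs1P [C0 HC0].
have : C0 \in [fset C in F | x \in C] by rewrite HC0 in_fset1.
rewrite !inE /= => /andP [H1 H2]; exists C0; split => // C HC HxC.
have : C \in [fset C in F | x \in C] by rewrite !inE /= HC HxC.
by rewrite HC0 in_fset1 => /eqP.
Qed.

Lemma ldeg_single (F : clauseset) x C0 : C0 \in F -> x \in C0 ->
  (forall C, C \in F -> x \in C -> C = C0) -> ldeg F x = 1.
Proof.
move=> H1 H2 H3; rewrite /ldeg.
have -> : [fset C in F | x \in C] = [fset C0].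
  apply/fsetP => C; rewrite !inE /=; apply/andP/eqP.
  - by case=> ??; apply: H3.
  - by move=> ->.
by rewrite cardfs1.
Qed.

Lemma ldeg_pos (F : clauseset) x C0 : C0 \in F -> x \in C0 -> 0 < ldeg F x.
Proof.
move=> H1 H2; rewrite /ldeg cardfs_gt0; apply/fset0Pn; exists C0.
by rewrite !inE /= H1 H2.
Qed.

Definition upd (f : nat -> bool) v b := fun w => if w == v then b else f w.

Lemma lit_cases (x y : lit) : lvar y = lvar x -> y = x \/ y = compl x.
Proof.
case: x => c d; case: y => a b; rewrite /lvar /compl /= => ->.
by case: b; case: d; auto.
Qed.

Lemma compl_neq (x : lit) : compl x != x.
Proof. by case: x => c [] /=; rewrite /compl /= xpair_eqE /= andbF. Qed.

Lemma part1 (F : clauseset) (HF : is_clauseset F) (HU : ~ satisfiable F) x :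
  ldeg F x = 1 -> (forall C, C \in F -> lvar x \in varC C) -> [fset x] \in F.
Proof.
move=> /ldeg1P [C0 [H0F Hx0 Huniq]] Hall.
suff -> : [fset x] = C0 by [].
apply/fsetP => y; rewrite in_fset1; apply/eqP/idP => [-> //|Hy].
apply/eqP/negPn/negP => Hyx.
have Hvy : lvar y != lvar x.
  apply/negP => /eqP /lit_cases [Heq|Heq]; first by rewrite Heq eqxx in Hyx.
  by move: (HF _ H0F _ Hx0); rewrite -Heq Hy.
apply: HU; exists (upd (upd xpredT (lvar x) (~~ x.2)) (lvar y) y.2) => C HC.
case: (boolP (x \in C)) => HxC.
  rewrite (Huniq C HC HxC); exists y => //.
  by rewrite /sat_lit /upd eqxx.
move: (Hall C HC) => /imfsetP [z /= Hz Hzx].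
case: (lit_cases _ _ (esym Hzx)) => Hzc; first by rewrite -Hzc Hz in HxC.
exists z => //; rewrite /sat_lit /upd -[z.1]/(lvar z) -Hzx.
rewrite (_ : (lvar x == lvar y) = false); last by rewrite eq_sym; apply: negbTE.
by rewrite eqxx Hzc.
Qed.

Lemma sat_unit f (x : lit) : sat_clause f [fset x] -> sat_lit f x.
Proof. by case=> y; rewrite in_fset1 => /eqP ->. Qed.

Lemma part2a (F : clauseset) (HMU : minimally_unsat F) x :
  [fset x] \in F -> ldeg F x = 1.
Proof.
move=> Hx; apply: (@ldeg_single F x [fset x] Hx); first by rewrite in_fset1.
move=> C HC HxC; apply/eqP/negPn/negP => Hne.
case: HMU => HU /(_ C HC) [f Hf]; apply: HU; exists f => D HD.
have Hfx : sat_lit f x.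
  by apply: sat_unit; apply: Hf; rewrite in_fsetD1 eq_sym Hne Hx.
case: (eqVneq D C) => [->|HDC]; first by exists x.
by apply: Hf; rewrite in_fsetD1 HDC HD.
Qed.

Lemma part2b (F : clauseset) (HF : is_clauseset F) (HMU : minimally_unsat F) x :
  [fset x] \in F -> exists2 C, C \in F & compl x \in C.
Proof.
move=> Hx; apply: NNPP => Hn.
have Hnc : forall C, C \in F -> compl x \notin C.
  by move=> C HC; apply/negP => H; apply: Hn; exists C.
case: HMU => HU /(_ _ Hx) [f Hf]; apply: HU.
exists (upd f (lvar x) x.2) => D HD.
case: (eqVneq D [fset x]) => [->|HDx].
  by exists x; rewrite ?in_fset1 // /sat_lit /upd eqxx.
have [y Hy Hfy] : sat_clause f D by apply: Hf; rewrite in_fsetD1 HDx HD.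
exists y => //; rewrite /sat_lit /upd.
case: (eqVneq y.1 (lvar x)) => Hyx.
  case: (lit_cases _ _ Hyx) => Hyc; first by rewrite Hyc.
  by move: (Hnc _ HD); rewrite -Hyc Hy.
exact Hfy.
Qed.

Lemma part2c (F : clauseset) (HMU : minimally_unsat F) x :
  [fset x] \in F -> saturated F -> forall C, C \in F -> lvar x \in varC C.
Proof.
move=> Hx [_ Hsat] C HC; apply/negPn/negP => HnC.
have Hv : lvar x \in varF F.
  apply/bigfcupP; exists [fset x]; first by rewrite Hx.
  by apply/imfsetP; exists x; rewrite ?in_fset1.
case: (Hsat C (compl x) HC Hv HnC) => f Hf.
case: HMU => HU _; apply: HU; exists f => D HD.
have HCx : C != [fset x].
  apply/negP => /eqP HCe; apply: (negP HnC); rewrite HCe.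
  by apply/imfsetP; exists x; rewrite ?in_fset1.
have Hfx : sat_lit f x.
  by apply: sat_unit; apply: Hf; rewrite in_fsetU in_fsetD1 eq_sym HCx Hx.
case: (eqVneq D C) => [->|HDC].
  have [y] : sat_clause f (C `|` [fset compl x]).
    by apply: Hf; rewrite in_fsetU in_fset1 eqxx orbT.
  rewrite in_fsetU in_fset1 => /orP [Hy Hfy|/eqP -> Hfc]; first by exists y.
  by move: Hfx Hfc; rewrite /sat_lit /compl /=; case: (f x.1); case: x.2.
by apply: Hf; rewrite in_fsetU in_fsetD1 HDC HD.
Qed.

Theorem lemma14 (F : clauseset) (HF : is_clauseset F) (HMU : minimally_unsat F) :
  (forall v : nat, singular F v ->
     (forall C, C \in F -> v \in varC C) ->
     [fset pos v] \in F \/ [fset neg v] \in F)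
  /\
  (forall x : lit, [fset x] \in F ->
     singular F (lvar x) /\ ldeg F x = 1 /\
     (saturated F -> forall C, C \in F -> lvar x \in varC C)).
Proof.
split.
  move=> v; rewrite /singular => Hs Hall.
  case: HMU => HU _.
  case: (leqP (ldeg F (pos v)) (ldeg F (neg v))) => Hle.
    rewrite (minn_idPl Hle) in Hs; left; exact: (@part1 F HF HU _ Hs Hall).
  rewrite (minn_idPr (ltnW Hle)) in Hs; right; exact: (@part1 F HF HU _ Hs Hall).
move=> x Hx; split; last split.
- have H1 := @part2a F HMU x Hx.
  have [C HC HcC] := @part2b F HF HMU x Hx.
  have H2 := @ldeg_pos F _ C HC HcC.
  rewrite /singular; case: x Hx H1 H2 {HcC} => c [] Hx H1 H2;
    rewrite /pos /neg /lvar /= ?H1.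
  + by rewrite /minn; move: H2; rewrite /compl /=; case: (ldeg F (c, false)) => [|[]].
  + by move: H2; rewrite /compl /= minnC /minn; case: (ldeg F (c, true)) => [|[]].
- exact: @part2a F HMU x Hx.
- exact: @part2c F HMU x Hx.
Qed.
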